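(* Let $T$ be the regular rooted tree of valence $p\geq 2$ with the embedded wire diffeology $\mathcal{D}_T$, and equip $\operatorname{Aut}T$ with the functional diffeology. Let $P:\mathbb{R}\to\operatorname{Aut}T$ be a plot of this diffeology. Then for all $m,n\in\mathbb{N}$, the automorphisms $P(n)$ and $P(n+1)$ belong to the same coset of $\operatorname{Stab}(n)$, and the automorphisms $P(-m)$ and $P(-m-1)$ belong to the same coset of $\operatorname{Stab}(m)$.
   Context: Fix a finite alphabet $A$ with $|A|=p\geq 2$. The vertices of $T$ are the finite words over $A$ (the root is the empty word); the length $|u|$ of a word is its level; two vertices are joined by an edge iff they have the form $a_1\dots a_n$ and $a_1\dots a_na_{n+1}$. As a topological space, $T$ is the 1-dimensional CW complex obtained by realizing each edge as a copy of $[0,1]$, with its usual topology. $\operatorname{Aut}T$ is the group of bijections of the vertex set fixing the root and preserving adjacency; each is regarded as a homeomorphism of the geometric realization mapping each edge affinely onto its image edge. $\operatorname{Stab}(n)$ is the (normal) subgroup of $\operatorname{Aut}T$ consisting of automorphisms fixing every vertex of level $n$. A diffeology on a set $X$ is a collection of maps $U\to X$ (''plots''), $U$ ranging over open subsets of all $\mathbb{R}^n$, containing all constant maps, closed under precomposition with smooth maps, and satisfying the sheaf condition. The diffeology generated by a set $\mathcal{A}$ of maps is the smallest diffeology containing $\mathcal{A}$. The embedded wire diffeology $\mathcal{D}_T$ is the diffeology on $T$ generated by all maps $\gamma:\mathbb{R}\to T$ that are injective, continuous, and homeomorphisms onto their images. A map between diffeological spaces is smooth if it sends plots to plots. Every element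 of $\operatorname{Aut}T$ is smooth $T\to T$. The product diffeology on $X\times Y$ is the coarsest diffeology making both projections smooth. The functional diffeology on $C^\infty(T,T)$ is the coarsest diffeology such that the evaluation map $C^\infty(T,T)\times T\to T$, $(f,x)\mapsto f(x)$, is smooth; $\operatorname{Aut}T\subseteq C^\infty(T,T)$ carries the induced subset diffeology. Equivalently, $P:U\to\operatorname{Aut}T$ is a plot iff $U\times T\to T$, $(u,x)\mapsto P(u)(x)$, is smooth. *)

(* Defs.v *)
From HB Require Import structures.
From mathcomp Require Import all_boot all_order all_algebra.
From mathcomp Require Import all_classical all_reals all_analysis.
Set Implicit Arguments. Unset Strict Implicit. Unset Printing Implicit Defensive.
Import Order.TTheory GRing.Theory Num.Theory.
Import numFieldNormedType.Exports.
Local Open Scope classical_set_scope.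
Local Open Scope ring_scope.

(* The tree T: vertices are words over a finite alphabet A.            *)
Section Tree.
Variable A : finType.

Definition adj (u v : seq A) : Prop :=
  (exists a, v = rcons u a) \/ (exists a, u = rcons v a).

Definition is_aut (g : seq A -> seq A) : Prop :=
  [/\ bijective g, g [::] = [::] & forall u v, adj u v <-> adj (g u) (g v)].

Definition AutT := {g : seq A -> seq A | is_aut g}.

Definition in_Stab (n : nat) (s : AutT) : Prop :=
  forall v : seq A, size v = n -> sval s v = v.

(* h lies in the coset g Stab(n) (= Stab(n) g, Stab(n) being normal) *)
Definition same_coset (n : nat) (g h : AutT) : Prop :=
  exists s : AutT, in_Stab n s /\ forall v, sval h v = sval g (sval s v).

End Tree.

(* A point is ([::], 0) (the root) or (w, t) with w nonempty and       *)
(* 0 < t <= 1: the point of the edge from the parent of w to w at      *)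
(* distance t from the parent (t = 1 is the vertex w).                 *)
Section Realization.
Variable R : realType.
Variable A : finType.

Definition point_ok (x : seq A * R) : Prop :=
  (x.1 = [::] /\ x.2 = 0) \/ (x.1 <> [::] /\ 0 < x.2 <= 1).

Definition Tpt := {x : seq A * R | point_ok x}.

Definition vtx_pt (u : seq A) (x : Tpt) : Prop :=
  if u is [::] then sval x = ([::], 0) else sval x = (u, 1).

(* x = phi_w(s), phi_w : [0,1] -> T the affine characteristic map of
   the closed edge from the parent of w to w (w nonempty, 0 <= s <= 1) *)
Definition edge_pt (w : seq A) (s : R) (x : Tpt) : Prop :=
  (s = 0 /\ vtx_pt (take (size w).-1 w) x) \/ (0 < s /\ sval x = (w, s)).

(* CW (weak) topology: U open iff its preimage under every closed-edge
   characteristic map is open in [0,1] *)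
Definition openT (U : set Tpt) : Prop :=
  forall w : seq A, w <> [::] -> forall s : R, 0 <= s <= 1 ->
  forall x, edge_pt w s x -> U x ->
  exists2 e : R, 0 < e & forall s' : R, 0 <= s' <= 1 -> `|s' - s| < e ->
     forall x', edge_pt w s' x' -> U x'.

Definition wire (gam : R -> Tpt) : Prop :=
  [/\ injective gam,
      (forall U, openT U -> open (gam @^-1` U))
    & (forall V : set R, open V ->
         exists W, openT W /\ gam @` V = W `&` range gam)].

(* action of an automorphism on the realization (affine on edges) *)
Lemma act_ok (g : AutT A) (x : Tpt) : point_ok (sval g (sval x).1, (sval x).2).
Proof.
move: g x => [f [[f' fK _] f0 _]] [[w t] hx] /=.
case: hx => [[/= hw ht]|[/= hw ht]].
  by left; rewrite /= hw f0 ht.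
right; split => // hgw; apply: hw.
by move: (fK w); rewrite /= in hgw; rewrite hgw -{1}f0 fK => <-.
Qed.

Definition act (g : AutT A) (x : Tpt) : Tpt := exist _ _ (act_ok g x).

End Realization.

Section Smooth.
Variable R : realType.

Fixpoint iderive (m : nat) (W : normedModType R) (vs : seq 'rV[R]_m)
  (f : 'rV[R]_m -> W) : 'rV[R]_m -> W :=
  match vs with
  | [::] => f
  | v :: vs' => fun x => 'D_v (iderive vs' f) x
  end.

Definition smooth_on (m : nat) (W : normedModType R) (V : set 'rV[R]_m)
  (f : 'rV[R]_m -> W) : Prop :=
  forall (vs : seq 'rV[R]_m) (x : 'rV[R]_m), V x ->
    {for x, continuous (iderive vs f)} /\
    forall v, derivable (iderive vs f) x v.

End Smooth.

(* Diffeologies. A parametrization U -> X (U open in R^n) is given by  *)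
(* a total map 'rV_n -> X, only its values on U being relevant.        *)
Section Diffeology.
Variable R : realType.
Variable X : Type.

Definition plotpred := forall n : nat, set 'rV[R]_n -> ('rV[R]_n -> X) -> Prop.

Record is_diffeology (D : plotpred) : Prop := {
  diff_ext : forall n (U : set 'rV[R]_n) (f g : 'rV[R]_n -> X), open U ->
    (forall x, U x -> f x = g x) -> D n U f -> D n U g;
  diff_const : forall n (U : set 'rV[R]_n) (c : X), open U -> D n U (fun _ => c);
  diff_comp : forall n m (U : set 'rV[R]_n) (V : set 'rV[R]_m)
    (f : 'rV[R]_n -> X) (h : 'rV[R]_m -> 'rV[R]_n),
    open U -> open V -> D n U f -> smooth_on V h -> h @` V `<=` U ->
    D m V (f \o h);
  diff_sheaf : forall n (U : set 'rV[R]_n) (f : 'rV[R]_n -> X), open U ->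
    (forall x, U x -> exists W, [/\ open W, W x, W `<=` U & D n W f]) ->
    D n U f }.

Definition gen_plot (G : plotpred) : plotpred :=
  fun n U f => forall D, is_diffeology D ->
    (forall k V g, G k V g -> D k V g) -> D n U f.

End Diffeology.

Section WireDiffeology.
Variable R : realType.
Variable A : finType.

Inductive wire_gen : forall n : nat, set 'rV[R]_n -> ('rV[R]_n -> Tpt R A) -> Prop :=
  | WireGen (gam : R -> Tpt R A) : wire gam ->
      wire_gen (n := 1) setT (fun x : 'rV[R]_1 => gam (x ord0 ord0)).

Definition DT_plot : plotpred R (Tpt R A) := gen_plot wire_gen.

(* functional diffeology on Aut T: P : U -> Aut T (U open in R^m) is a
   plot iff (u, x) |-> P(u)(x), U x T -> T, is smooth for the product
   diffeology (plots of U x T = pairs of a plot of U, i.e. a smooth map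
   into U, and a plot of T) *)
Definition Aut_plot (m : nat) (U : set 'rV[R]_m) (P : 'rV[R]_m -> AutT A) : Prop :=
  forall n (V : set 'rV[R]_n) (Q1 : 'rV[R]_n -> 'rV[R]_m) (Q2 : 'rV[R]_n -> Tpt R A),
    open V -> smooth_on V Q1 -> Q1 @` V `<=` U -> DT_plot V Q2 ->
    DT_plot V (fun v => act (P (Q1 v)) (Q2 v)).

End WireDiffeology.

(* Main.v *)
Require Import Defs.
From HB Require Import structures.
From mathcomp Require Import all_boot all_order all_algebra.
From mathcomp Require Import all_classical all_reals all_analysis.
From mathcomp Require Import zify.
Import Order.TTheory GRing.Theory Num.Theory.
Import numFieldNormedType.Exports.
Local Open Scope classical_set_scope.
Local Open Scope ring_scope.

Section Aux.
Variable A : finType.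

Lemma aut_size (g : seq A -> seq A) : is_aut g -> forall w, size (g w) = size w.
Proof.
case=> gbij g0 gadj.
have ginj := bij_inj gbij.
suff H : forall n w, (size w <= n)%N -> size (g w) = size w by move=> w; exact: H.
elim=> [|n IH] w.
  by rewrite leqn0 size_eq0 => /eqP ->; rewrite g0.
rewrite leq_eqVlt ltnS => /orP[/eqP Hw|]; last exact: IH.
case/lastP: w Hw => [//|w' a] Hw.
rewrite size_rcons in Hw; case: Hw => Hw'.
have IH' := IH w' (eq_leq Hw').
have : adj w' (rcons w' a) by left; exists a.
move/gadj => [[b ->]|[b Hb]]; first by rewrite !size_rcons IH'.
exfalso.
have Hs: size (g w') = (size (g (rcons w' a))).+1 by rewrite Hb size_rcons.
case/lastP: w' Hw' IH IH' Hb Hs => [|w'' c] Hw' IH IH' Hb Hs.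
  by rewrite g0 in Hs.
have IH'' : size (g w'') = size w''.
  by apply: IH; rewrite -Hw' size_rcons leqnSn.
have : adj w'' (rcons w'' c) by left; exists c.
move/gadj => [[d Hd]|[d Hd]]; last first.
  by move: (f_equal size Hd); rewrite size_rcons IH'' IH' size_rcons; lia.
rewrite Hb in Hd; case/rcons_inj: Hd => /ginj Hd _.
by move: (f_equal size Hd); rewrite !size_rcons; lia.
Qed.

Lemma same_coset_of (n : nat) (g h : AutT A) :
  (forall v, size v = n -> sval h v = sval g v) -> same_coset n g h.
Proof.
case: g => g [gb g0 gadj]; case: h => h [hb h0 hadj] /= Heq.
case: (gb) => gi gK Kg.
have gib : bijective gi by exists g.
have sok : is_aut (gi \o h).
  split.
  - exact: bij_comp.
  - by rewrite /= h0 -g0 gK.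
  - move=> u v; rewrite hadj -{1}(Kg (h u)) -{1}(Kg (h v)) -gadj //.
exists (exist _ _ sok); split.
  by move=> v Hv /=; rewrite Heq // gK.
by move=> v /=; rewrite Kg.
Qed.

End Aux.
Section Diff.
Variable R : realType.
Variable A : finType.

Definition Dc : plotpred R (Tpt R A) :=
  fun n U f => forall W, @Defs.openT R A W -> open (U `&` f @^-1` W).

Lemma Dc_diff : is_diffeology Dc.
Proof.
split.
- move=> n U f g oU fg Df W oW.
  have -> : U `&` g @^-1` W = U `&` f @^-1` W.
    by apply/seteqP; split => x [Ux Wx]; split => //=; rewrite ?fg // -fg.
  exact: Df.
- move=> n U c oU W oW.
  have [Wc|Wc] := pselect (W c).
    by have -> : U `&` (fun=> c) @^-1` W = U by apply/seteqP; split => x //= [].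
  by have -> : U `&` (fun=> c) @^-1` W = set0 by apply/seteqP; split => x //= [].
- move=> n m U V f h oU oV Df sh hVU W oW.
  have hc : {in V, continuous h}.
    by move=> x; rewrite inE => Vx; have [+ _] := sh [::] x Vx.
  have := (continuous_inP h oV).1 hc _ (Df W oW).
  have -> : V `&` h @^-1` (U `&` f @^-1` W) = V `&` (f \o h) @^-1` W.
    apply/seteqP; split => x [Vx Hx]; split => //.
      by case: Hx.
    by split => //; apply: hVU; exists x.
  by [].
- move=> n U f oU loc W oW.
  rewrite openE => x [Ux Wx].
  have [W' [oW' W'x W'U DW']] := loc x Ux.
  have O := DW' W oW.
  have : nbhs x (W' `&` f @^-1` W) by apply: open_nbhs_nbhs; split.
  apply: filterS => y [W'y Wy]; split => //; exact: W'U.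
Qed.

Lemma Dc_gen k V g : @wire_gen R A k V g -> Dc k V g.
Proof.
case=> gam [_ gc _] W oW.
rewrite setTI.
have := (continuousP (fun x : 'rV[R]_1 => x ord0 ord0)).1 (@coord_continuous _ _ _ _ _) _ (gc W oW).
by [].
Qed.

Lemma DT_Dc n U f : @DT_plot R A n U f -> Dc n U f.
Proof. by move=> H; apply: H; [exact: Dc_diff|exact: Dc_gen]. Qed.

Definition Wpre (u : seq A) : set (Tpt R A) :=
  fun y => exists r, (sval y).1 = u ++ r.

Lemma edge_word (w : seq A) (s : R) (x : Tpt R A) : edge_pt w s x ->
  ((sval x).1 = take (size w).-1 w) \/ (0 < s /\ (sval x).1 = w).
Proof.
case=> [[_ Hv]|[s0 ->]]; last by right.
left; move: Hv; rewrite /vtx_pt; case: (take _ _) => [|a l] -> //.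
Qed.

Lemma Wpre_open u : @Defs.openT R A (Wpre u).
Proof.
move=> w w0 s /andP[s0 s1] x ex [r Hr].
case: (edge_word _ _ _ ex) => [Hx|[sp Hx]].
- exists 1 => // s' _ _ x' ex'; rewrite /Wpre.
  have Hw : w = take (size w).-1 w ++ drop (size w).-1 w by rewrite cat_take_drop.
  case: (edge_word _ _ _ ex') => [->|[_ ->]]; first by rewrite -Hx; exists r.
  by exists (r ++ drop (size w).-1 w); rewrite catA -Hr Hx cat_take_drop.
- exists s => // s' _ Hs' x' ex'; rewrite /Wpre.
  case: ex' => [[s'0 _]|[s'p ->]]; last by rewrite /= -Hx; exists r.
  by move: Hs'; rewrite s'0 sub0r normrN gtr0_norm // ltxx.
Qed.

Lemma iderive_id (vs : seq 'rV[R]_1) :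
  iderive vs (@id 'rV[R]_1) = id \/ exists c, iderive vs (@id 'rV[R]_1) = cst c.
Proof.
elim: vs => [|v vs [IH|[c IH]]]; first by left.
- right; exists v; apply/funext => x /=; rewrite IH; exact: derive_id.
- right; exists 0; apply/funext => x /=; rewrite IH; exact: derive_cst.
Qed.

Lemma smooth_id : smooth_on setT (@id 'rV[R]_1).
Proof.
move=> vs x _; case: (iderive_id vs) => [->|[c ->]]; split.
- exact: cvg_id.
- move=> v; have H := is_derive_id x v; exact: (ex_derive (is_derive:=H)).
- exact: cst_continuous.
- move=> v; have H := is_derive_cst c x v; exact: (ex_derive (is_derive:=H)).
Qed.

Definition cR (t : R) : 'rV[R]_1 := t *: const_mx 1.

Lemma cR_cont : continuous cR.
Proof.
move=> t; apply: continuousZr_tmp; exact: cvg_id.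
Qed.

Lemma cR00 t : cR t ord0 ord0 = t.
Proof. by rewrite /cR !mxE mulr1. Qed.

End Diff.

Lemma words_const (R : realType) (A : finType) (P : R -> AutT A) :
  Aut_plot (m := 1) setT (fun x : 'rV[R]_1 => P (x ord0 ord0)) ->
  forall v a b, sval (P a) v = sval (P b) v.
Proof.
move=> HP v a b.
have vok : point_ok (v, (if v is [::] then 0 else 1 : R)).
  by case: v => [|c l]; [left|right; split => //; rewrite ltr01 lexx].
pose vpt : Tpt R A := exist _ _ vok.
have DTc : @DT_plot R A 1 setT (fun _ => vpt).
  move=> D HD _; exact: (diff_const HD _ openT).
have Hpl := HP 1 setT id (fun _ => vpt) openT (@smooth_id R) (fun _ _ => I) DTc.
have Dp := @DT_Dc R A _ _ _ Hpl.
pose w t := sval (P t) v.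
have Sopen : forall u, open [set t | exists r, w t = u ++ r].
  move=> u; have := Dp (@Wpre R A u) (@Wpre_open R A u); rewrite setTI => O.
  have := (continuousP (@cR R)).1 (@cR_cont R) _ O.
  congr open; apply/seteqP; split => t /=; rewrite /Wpre /= cR00 //.
have wsize : forall t, size (w t) = size v.
  by move=> t; rewrite /w; case: (P t) => g Hg /=; exact: aut_size.
have Seq : forall u t, size u = size v -> (exists r, w t = u ++ r) <-> w t = u.
  move=> u t Hu; split => [[r Hr]|->]; last by exists [::]; rewrite cats0.
  have := f_equal size Hr; rewrite size_cat wsize Hu => /eqP.
  rewrite -{1}(addn0 (size v)) eqn_add2l eq_sym size_eq0 => /eqP Hr0.
  by rewrite Hr Hr0 cats0.
pose E := [set t | w t = w a].
have Eopen : open E.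
  have -> : E = [set t | exists r, w t = w a ++ r]; last exact: Sopen.
  by apply/seteqP; split => t /Seq; apply; rewrite wsize.
have Eclosed : closed E.
  rewrite -openC openE => t Et.
  have : nbhs t [set s | exists r, w s = w t ++ r].
    by apply: open_nbhs_nbhs; split; [exact: Sopen|exists [::]; rewrite cats0].
  apply: filterS => s Hs.
  have Hws : w s = w t by apply/(Seq _ _ (wsize t)).
  by move=> HE; apply: Et; rewrite /E /= -Hws.
have cT : connected [set: R] by apply/connected_intervalP.
have := cT E (ex_intro _ a erefl) (ex_intro2 _ _ E Eopen (esym (setTI E)))
  (ex_intro2 _ _ E Eclosed (esym (setTI E))).
move=> EE; have : E b by rewrite EE.
by rewrite /E /w /= => ->.
Qed.

Theorem mainTheorem3 (R : realType) (A : finType) (hA : (1 < #|A|)%N)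
  (P : R -> AutT A) :
  Aut_plot (m := 1) setT (fun x : 'rV[R]_1 => P (x ord0 ord0)) ->
  forall m n : nat,
    same_coset n (P n%:R) (P n.+1%:R) /\
    same_coset m (P (- m%:R)) (P (- m.+1%:R)).
Proof.
move=> HP m n; split; apply: same_coset_of => v _; exact: words_const.
Qed.
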